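(* Let $G$ satisfy conditions (1)–(5) below, with $d$ vertices and genus $g$, and let $C_G\subset\mathbb{P}^{d-g}$ be the union of lines defined by an admissible labeling of $\tilde G$ (see context). Suppose $w$ is a vertex of degree $3$ whose edges are labeled $e_j$, $e_k$, $e_j-e_k$. If we interchange the labels $e_j$ and $e_j-e_k$ on the edges meeting at $w$, then the union of lines associated to the new labeling is the image of the original $C_G$ under a linear automorphism $\sigma$ of $\mathbb{P}^{d-g}$ that is an involution ($\sigma^2=\mathrm{id}$).
   Context: Work over an algebraically closed field $k$ of characteristic zero, $S=k[x_0,\ldots,x_{d-g}]$. Conditions on the finite graph $G=(V,E)$, $d=|V|$, $g=|E|-d+1$: (1) connected; (2) simple; (3) every vertex has degree at most $3$ and some vertex has degree less than $3$; (4) the shortest path between any two distinct vertices of degree $3$ has at least $3$ edges; (5) no triangles. Let $\tilde G$ be obtained from $G$ by attaching one loop at each vertex of degree $1$. An admissible labeling of the edges of $\tilde G$: for each vertex of degree $3$ choose two indices $j\neq k$ in $\{0,\ldots,d-g\}$ and label its three edges $e_j,e_k,e_j-e_k$; label each remaining edge $e_i$ with an unused index, distinct indices being used throughout. An index $i$ appears on an edge labeled $e_i$ or $\pm(e_i-e_j)$. For each vertex $v$: if $v$ has degree $3$ with edges $e_j,e_k,e_j-e_k$, $I_v=(x_i : i\neq j,k)$; otherwise $I_v$ is generated by the $x_i$ with $i$ not appearing on an edge of $\tilde G$ at $v$, together with $x_j-x_k$ if some edge at $v$ is labeled $e_j-e_k$. Then $L_v=V(I_v)$ is a line and $C_G=\bigcup_v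 L_v$. *)

(* Defs.v *)
From HB Require Import structures.
From mathcomp Require Import all_boot all_order all_algebra.
Set Implicit Arguments. Unset Strict Implicit. Unset Printing Implicit Defensive.
Import Order.TTheory GRing.Theory Num.Theory.

Section GraphDefs.
Variable V : finType.
Variable adj : rel V.

Definition deg (v : V) : nat := #|[set u | adj v u]|.

Definition gedges : {set {set V}} :=
  [set E | [exists u, exists v, adj u v && (E == [set u; v])]].

(** edges of G~ : edges of G plus one loop (a 1-element set {v}) at each
    vertex of degree 1 *)
Definition tedges : {set {set V}} :=
  gedges :|: [set E | [exists v, (deg v == 1%N) && (E == [set v])]].

Definition genus : nat := (#|gedges| + 1 - #|V|)%N.

Definition good_graph : Prop :=
  [/\ (forall u v, connect adj u v),
      symmetric adj /\ irreflexive adj,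
      (forall v, deg v <= 3)%N /\ (exists v, deg v < 3)%N,
      (forall u v, deg u = 3%N -> deg v = 3%N -> u != v ->
          ~~ adj u v /\ ~ (exists x, adj u x && adj x v))
    & (forall a b c, ~~ [&& adj a b, adj b c & adj c a])].
End GraphDefs.

(** labels: [Single i] is e_i, [Diff j k] is e_j - e_k *)
Inductive label (N : nat) : Type :=
| Single of 'I_N
| Diff of 'I_N & 'I_N.
Arguments Single {N}.
Arguments Diff {N}.

Section Labeling.
Variables (V : finType) (adj : rel V) (N : nat).
Variable lab : {set V} -> label N.

Definition appears (i : 'I_N) (l : label N) : Prop :=
  l = Single i \/ exists j, l = Diff i j \/ l = Diff j i.

Definition appears_at (v : V) (i : 'I_N) : Prop :=
  exists2 E, E \in tedges adj & v \in E /\ appears i (lab E).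

Definition labels_at_are (v : V) (j k : 'I_N) : Prop :=
  [/\ (forall E, E \in tedges adj -> v \in E ->
         lab E = Single j \/ lab E = Single k \/ lab E = Diff j k),
      (exists2 E, E \in tedges adj & v \in E /\ lab E = Single j),
      (exists2 E, E \in tedges adj & v \in E /\ lab E = Single k)
    & (exists2 E, E \in tedges adj & v \in E /\ lab E = Diff j k)].

Definition remaining (E : {set V}) : Prop :=
  E \in tedges adj /\ forall v, v \in E -> deg adj v <> 3%N.

Definition admissible : Prop :=
  exists c : V -> 'I_N * 'I_N,
  [/\ (forall v, deg adj v = 3%N ->
          (c v).1 <> (c v).2 /\ labels_at_are v (c v).1 (c v).2),
      (forall E, remaining E -> exists i, lab E = Single i),
      (forall v v', deg adj v = 3%N -> deg adj v' = 3%N -> v <> v' ->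
          forall i, (i = (c v).1 \/ i = (c v).2) ->
                    i <> (c v').1 /\ i <> (c v').2),
      (forall v E i, deg adj v = 3%N -> remaining E -> lab E = Single i ->
          i <> (c v).1 /\ i <> (c v).2)
    & (forall E E' i, remaining E -> remaining E' ->
          lab E = Single i -> lab E' = Single i -> E = E')].

(** the line L_v = V(I_v), as its affine cone in K^N *)
Definition on_line (K : fieldType) (v : V) (x : 'cV[K]_N) : Prop :=
  if deg adj v == 3%N then
    forall i, ~ appears_at v i -> x i ord0 = 0%R
  else
    (forall i, ~ appears_at v i -> x i ord0 = 0%R) /\
    (forall E j k, E \in tedges adj -> v \in E -> lab E = Diff j k ->
       x j ord0 = x k ord0).

Definition on_curve (K : fieldType) (x : 'cV[K]_N) : Prop :=
  exists v, on_line v x.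
End Labeling.

Definition swap_labels (V : finType) (N : nat) (lab : {set V} -> label N)
    (w : V) (j k : 'I_N) : {set V} -> label N :=
  fun E =>
    if w \in E then
      match lab E with
      | Single i => if i == j then Diff j k else Single i
      | Diff a b => if (a == j) && (b == k) then Single j else Diff a b
      end
    else lab E.

(* Main.v *)
Require Import Defs.
From HB Require Import structures.
From mathcomp Require Import all_boot all_order all_algebra.
Import Order.TTheory GRing.Theory Num.Theory.
Local Open Scope ring_scope.

Definition appb {N} (i : 'I_N) (l : label N) : bool :=
  match l with Single a => a == i | Diff a b => (a == i) || (b == i) end.

Lemma appearsP N (i : 'I_N) l : appears i l <-> appb i l.
Proof.
split.
- case=> [->|[a [->|->]]] /=; by rewrite eqxx ?orbT.
- case: l => [a|a b] /=.
  + by move/eqP->; left.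
  + case/orP=> /eqP->; right; [exists b; left | exists a; right]; done.
Qed.

Definition Mx (K : fieldType) N (j k : 'I_N) : 'M[K]_N :=
  \matrix_(a, b) (if a == k then (b == j)%:R - (b == k)%:R else (a == b)%:R).

Arguments Mx K {N}.

Lemma MmulE (K : fieldType) N p (j k : 'I_N) (B : 'M[K]_(N, p)) a b :
  j != k -> (Mx K j k *m B) a b = if a == k then B j b - B k b else B a b.
Proof.
move=> jk; rewrite mxE.
under eq_bigr do rewrite mxE.
case: (eqVneq a k) => [Hak|nak].
- subst a.
  under eq_bigr do rewrite mulrBl.
  rewrite sumrB (bigD1 j) //= eqxx mul1r big1 ?addr0; last first.
    by move=> t /negPf ->; rewrite mul0r.
  rewrite (bigD1 k) //= eqxx mul1r big1 ?addr0 //; by move=> t /negPf ->; rewrite mul0r.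
-
  rewrite (bigD1 a) //= eqxx mul1r big1 ?addr0 // => t; rewrite eq_sym => /negPf ->; by rewrite mul0r.
Qed.

Lemma MM (K : fieldType) N (j k : 'I_N) : j != k -> Mx K j k *m Mx K j k = 1%:M.
Proof.
move=> jk; apply/matrixP => a b; rewrite MmulE // !mxE (negPf jk) eqxx.
have [->|nak] := eqVneq a k; rewrite ?eqxx.
- have [->|nbj] := eqVneq b j; rewrite ?eqxx ?(negPf jk) ?(eq_sym k j) ?(negPf jk).
    by rewrite subr0 subrr.
  by rewrite !sub0r opprK eq_sym.
- by [].
Qed.

Section Main.
Variables (K : fieldType) (V : finType) (adj : rel V) (N : nat)
  (lab : {set V} -> label N) (w : V) (j k : 'I_N).
Hypothesis jk : j != k.
Hypothesis Hsym : symmetric adj.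
Hypothesis H4 : forall u v, deg adj u = 3%N -> deg adj v = 3%N -> u != v -> ~~ adj u v.
Hypothesis Hw3 : deg adj w = 3%N.
Hypothesis Hlw : labels_at_are adj lab w j k.
Hypothesis Hfar : forall E i, E \in tedges adj -> w \notin E -> appears i (lab E) ->
  i != j /\ i != k.

Local Notation lab' := (swap_labels lab w j k).
Local Notation M := (Mx K j k).

Lemma Mx_j (x : 'cV[K]_N) : (M *m x) j ord0 = x j ord0.
Proof. by rewrite MmulE // (negPf jk). Qed.
Lemma Mx_k (x : 'cV[K]_N) : (M *m x) k ord0 = x j ord0 - x k ord0.
Proof. by rewrite MmulE // eqxx. Qed.
Lemma Mx_o (x : 'cV[K]_N) i : i != k -> (M *m x) i ord0 = x i ord0.
Proof. by move=> ik; rewrite MmulE // (negPf ik). Qed.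

Lemma Mfix (x : 'cV[K]_N) : x j ord0 = 0 -> x k ord0 = 0 -> M *m x = x.
Proof.
move=> h1 h2; apply/matrixP => a b; rewrite [b]ord1 MmulE //.
case: eqP => // ->; by rewrite h1 h2 subr0.
Qed.

Lemma swap_out (E : {set V}) : w \notin E -> lab' E = lab E.
Proof. by move=> h; rewrite /swap_labels (negPf h). Qed.

Lemma swap_w (E : {set V}) : E \in tedges adj -> w \in E ->
  [\/ lab E = Single j /\ lab' E = Diff j k,
      lab E = Single k /\ lab' E = Single k |
      lab E = Diff j k /\ lab' E = Single j].
Proof.
move=> HE HwE; rewrite /swap_labels HwE.
case: Hlw => H1 _ _ _.
case: (H1 E HE HwE) => [->|[->|->]].
- by apply: Or31; rewrite eqxx.
- by apply: Or32; rewrite eq_sym (negPf jk).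
- by apply: Or33; rewrite !eqxx.
Qed.

Lemma app_w L i : (L = Single j \/ L = Single k \/ L = Diff j k) -> appb i L ->
  i = j \/ i = k.
Proof.
case=> [->|[->|->]] /=.
- by move/eqP; left.
- by move/eqP; right.
- by case/orP => /eqP; [left|right].
Qed.

Lemma on_line_same (lab1 lab2 : {set V} -> label N) v (x : 'cV[K]_N) :
  (forall E, E \in tedges adj -> v \in E -> lab1 E = lab2 E) ->
  on_line adj lab1 v x <-> on_line adj lab2 v x.
Proof.
move=> H.
have Ha : forall i, appears_at adj lab1 v i <-> appears_at adj lab2 v i.
  move=> i; split => -[E HE [HvE Hap]]; exists E => //; split => //.
    by rewrite -H.
  by rewrite H.
rewrite /on_line; case: (deg adj v == 3%N).
  split => Hz i Hi; apply: Hz => Hc; apply: Hi.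
    by apply (proj1 (Ha i)).
  by apply (proj2 (Ha i)).
split => -[Hz Hd]; split.
- move=> i Hi; apply: Hz => Hc; apply: Hi; by apply (proj1 (Ha i)).
- move=> E a b HE HvE Hl; apply: (Hd E) => //; by rewrite H.
- move=> i Hi; apply: Hz => Hc; apply: Hi; by apply (proj2 (Ha i)).
- move=> E a b HE HvE Hl; apply: (Hd E) => //; by rewrite -H.
Qed.

Lemma on_line_zero (L : {set V} -> label N) v (x : 'cV[K]_N) :
  on_line adj L v x -> forall i, ~ appears_at adj L v i -> x i ord0 = 0.
Proof. by rewrite /on_line; case: (deg adj v == 3%N) => // -[]. Qed.

Lemma appears_at_w (L : {set V} -> label N) :
  (forall E, E \in tedges adj -> w \in E ->
     L E = Single j \/ L E = Single k \/ L E = Diff j k) ->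
  (exists2 E, E \in tedges adj & w \in E /\ L E = Single j) ->
  (exists2 E, E \in tedges adj & w \in E /\ L E = Single k) ->
  forall i, appears_at adj L w i <-> (i = j \/ i = k).
Proof.
move=> H1 [E1 HE1 [Hw1 HL1]] [E2 HE2 [Hw2 HL2]] i; split.
- case=> E HE [HwE Hap].
  have Hb := proj1 (appearsP _ _ _) Hap.
  exact: (@app_w (L E) i (H1 E HE HwE) Hb).
- case=> ->; [exists E1 => //; split => //; rewrite HL1; by left
             |exists E2 => //; split => //; rewrite HL2; by left].
Qed.

Lemma key_w (x : 'cV[K]_N) : on_line adj lab' w x <-> on_line adj lab w (M *m x).
Proof.
case: (Hlw) => H1 [E1 HE1 [Hw1 HL1]] [E2 HE2 [Hw2 HL2]] [E3 HE3 [Hw3' HL3]].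
have A1 := appears_at_w lab H1 (ex_intro2 _ _ E1 HE1 (conj Hw1 HL1))
            (ex_intro2 _ _ E2 HE2 (conj Hw2 HL2)).
have H1' : forall E, E \in tedges adj -> w \in E ->
     lab' E = Single j \/ lab' E = Single k \/ lab' E = Diff j k.
  by move=> E HE HwE; case: (swap_w E HE HwE) => -[_ ->]; auto.
have A2 : forall i, appears_at adj lab' w i <-> (i = j \/ i = k).
  apply: (appears_at_w lab') => //.
    exists E3 => //; split => //.
    case: (swap_w E3 HE3 Hw3') => -[h ->] //; rewrite HL3 in h; try discriminate;
    by case: h => /eqP; rewrite ?(negPf jk) // eq_sym (negPf jk).
  exists E2 => //; split => //.
  case: (swap_w E2 HE2 Hw2) => -[h ->] //; rewrite HL2 in h; try discriminate;
    by case: h => /eqP; rewrite ?(negPf jk) // eq_sym (negPf jk).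
rewrite /on_line Hw3 eqxx; split => H i Hi.
- have [ij ik] : i <> j /\ i <> k by split => h; apply: Hi; apply/A1; auto.
  rewrite Mx_o; last by apply/eqP.
  apply: H => /A2; tauto.
- have [ij ik] : i <> j /\ i <> k by split => h; apply: Hi; apply/A2; auto.
  rewrite -(Mx_o x i); last by apply/eqP.
  apply: H => /A1; tauto.
Qed.

Lemma edge_w (E : {set V}) v : E \in tedges adj -> v \in E -> w \in E -> v != w ->
  adj w v /\ E = [set v; w].
Proof.
rewrite /tedges inE => /orP [].
- rewrite /gedges inE => /existsP [a /existsP [b /andP [Hab /eqP ->]]].
  rewrite !inE => /orP [/eqP -> | /eqP ->] /orP [/eqP -> | /eqP ->]; rewrite ?eqxx //.
  + by move=> _; split; [rewrite Hsym | ].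
  + by move=> _; split; [ | rewrite setUC].
- rewrite inE => /existsP [t /andP [_ /eqP ->]].
  by rewrite !inE => /eqP -> /eqP ->; rewrite eqxx.
Qed.

Lemma key_far v (x : 'cV[K]_N) :
  (forall E : {set V}, E \in tedges adj -> v \in E -> w \notin E) ->
  on_line adj lab' v x <-> on_line adj lab v (M *m x).
Proof.
move=> Hn.
have Hs : on_line adj lab' v x <-> on_line adj lab v x.
  apply: on_line_same => E HE HvE; exact: swap_out (Hn E HE HvE).
have Hna : forall i, (i = j \/ i = k) -> ~ appears_at adj lab v i.
  move=> i Hi [E HE [HvE Hap]]; have [h1 h2] := Hfar E i HE (Hn E HE HvE) Hap.
  by case: Hi => Hi; [move: h1|move: h2]; rewrite Hi eqxx.
split => [/Hs H | H].
- have h1 := on_line_zero lab v x H j (Hna j (or_introl erefl)).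
  have h2 := on_line_zero lab v x H k (Hna k (or_intror erefl)).
  by rewrite Mfix.
- have h1 := on_line_zero lab v _ H j (Hna j (or_introl erefl)).
  have h2 := on_line_zero lab v _ H k (Hna k (or_intror erefl)).
  rewrite Mx_j in h1; rewrite Mx_k h1 sub0r in h2.
  have h3 : x k ord0 = 0 by apply/eqP; rewrite -oppr_eq0 h2.
  apply/Hs; by rewrite (Mfix x h1 h3) in H.
Qed.

Section E0.
Variables (v : V) (E0 : {set V}).
Hypothesis HE0 : E0 \in tedges adj.
Hypothesis HvE0 : v \in E0.
Hypothesis HwE0 : w \in E0.
Hypothesis Hvw : v != w.

Lemma uniqE0 (E : {set V}) : E \in tedges adj -> v \in E -> w \in E -> E = E0.
Proof.
move=> HE HvE HwE.
by rewrite (edge_w E v HE HvE HwE Hvw).2 (edge_w E0 v HE0 HvE0 HwE0 Hvw).2.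
Qed.

Lemma degv : deg adj v != 3%N.
Proof.
apply/eqP => hv; have := H4 w v Hw3 hv; rewrite eq_sym => /(_ Hvw).
by rewrite (edge_w E0 v HE0 HvE0 HwE0 Hvw).1.
Qed.

Definition R i := exists2 E, E \in tedges adj &
  [/\ v \in E, w \notin E & appears i (lab E)].

Lemma Rjk i : R i -> i != j /\ i != k.
Proof. case=> E HE [HvE HwE Hap]; exact: Hfar E i HE HwE Hap. Qed.

Lemma app_dec (L : {set V} -> label N) : (forall E : {set V}, w \notin E -> L E = lab E) ->
  forall i, appears_at adj L v i <-> appears i (L E0) \/ R i.
Proof.
move=> HL i; split.
- case=> E HE [HvE Hap]; case: (boolP (w \in E)) => HwE.
  + by left; rewrite -(uniqE0 E HE HvE HwE).
  + by right; exists E => //; split => //; rewrite -HL.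
- case=> [Hap | [E HE [HvE HwE Hap]]].
  + by exists E0.
  + by exists E => //; split => //; rewrite HL.
Qed.

Definition DR (z : 'cV[K]_N) := forall (E : {set V}) a b, E \in tedges adj -> v \in E ->
  w \notin E -> lab E = Diff a b -> z a ord0 = z b ord0.

Lemma D_dec (L : {set V} -> label N) (z : 'cV[K]_N) : (forall E : {set V}, w \notin E -> L E = lab E) ->
  (forall (E : {set V}) a b, E \in tedges adj -> v \in E -> L E = Diff a b -> z a ord0 = z b ord0) <->
  ((forall a b, L E0 = Diff a b -> z a ord0 = z b ord0) /\ DR z).
Proof.
move=> HL; split.
- move=> H; split.
  + move=> a b; exact: H E0 a b HE0 HvE0.
  + move=> E a b HE HvE HwE Hl; apply: (H E) => //; by rewrite HL.
- case=> H1 H2 E a b HE HvE Hl; case: (boolP (w \in E)) => HwE.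
  + apply: H1; by rewrite -(uniqE0 E HE HvE HwE).
  + apply: (H2 E) => //; by rewrite -HL.
Qed.

Lemma DR_M x : DR x <-> DR (M *m x).
Proof.
have Hab : forall (E : {set V}) a b, E \in tedges adj -> w \notin E -> lab E = Diff a b ->
    a != k /\ b != k.
  move=> E a b HE HwE Hl.
  have ha : appears a (lab E) by rewrite Hl; right; exists b; left.
  have hb : appears b (lab E) by rewrite Hl; right; exists a; right.
  by split; [exact: (Hfar E a HE HwE ha).2 | exact: (Hfar E b HE HwE hb).2].
split => H E a b HE HvE HwE Hl; have [ha hb] := Hab E a b HE HwE Hl.
- rewrite !Mx_o //; exact: H E a b HE HvE HwE Hl.
- rewrite -(Mx_o x a ha) -(Mx_o x b hb); exact: H E a b HE HvE HwE Hl.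
Qed.

Definition Zo (z : 'cV[K]_N) := forall i, i != j -> i != k -> ~ R i -> z i ord0 = 0.

Lemma Zo_M x : Zo x <-> Zo (M *m x).
Proof.
split => H i ij ik nR; [rewrite Mx_o //; exact: H | rewrite -(Mx_o x i ik); exact: H].
Qed.

Lemma Z_dec (L : {set V} -> label N) (z : 'cV[K]_N) : (forall E : {set V}, w \notin E -> L E = lab E) ->
  (L E0 = Single j \/ L E0 = Single k \/ L E0 = Diff j k) ->
  (forall i, ~ appears_at adj L v i -> z i ord0 = 0) <->
  [/\ (~~ appb j (L E0) -> z j ord0 = 0), (~~ appb k (L E0) -> z k ord0 = 0) & Zo z].
Proof.
move=> HL H3; have AD := app_dec L HL.
have nRj : ~ R j by move=> /Rjk []; rewrite eqxx.
have nRk : ~ R k by move=> /Rjk [_]; rewrite eqxx.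
split.
- move=> H; split.
  + move=> hj; apply: H => /AD [/appearsP|//]; by rewrite (negPf hj).
  + move=> hk; apply: H => /AD [/appearsP|//]; by rewrite (negPf hk).
  + move=> i ij ik nR; apply: H => /AD [/appearsP Hb|//].
    by case: (app_w (L E0) i H3 Hb) => Hi; [move: ij|move: ik]; rewrite Hi eqxx.
- case=> Hj Hk Ho i Hn.
  have nA : ~ appears i (L E0) by move=> h; apply: Hn; apply/AD; left.
  have nR' : ~ R i by move=> h; apply: Hn; apply/AD; right.
  case: (eqVneq i j) => [Hij|ij].
    subst i; apply: Hj; apply/negP => h; apply: nA; exact/appearsP.
  case: (eqVneq i k) => [Hik|ik].
    subst i; apply: Hk; apply/negP => h; apply: nA; exact/appearsP.
  exact: Ho.
Qed.

Lemma key_E0 x : on_line adj lab' v x <-> on_line adj lab v (M *m x).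
Proof.
have HL' : forall E : {set V}, w \notin E -> lab' E = lab E by move=> E; exact: swap_out.
have HL : forall E : {set V}, w \notin E -> lab E = lab E by [].
rewrite /on_line (negPf degv).
have [H3 H3'] : (lab E0 = Single j \/ lab E0 = Single k \/ lab E0 = Diff j k) /\
                (lab' E0 = Single j \/ lab' E0 = Single k \/ lab' E0 = Diff j k).
  by case: (swap_w E0 HE0 HwE0) => -[-> ->]; split; auto.
have ZM := Zo_M x; have DM := DR_M x.
split => -[HZ HD].
- have [Zj Zk Zo'] := (Z_dec lab' x HL' H3').1 HZ.
  have [Dc DR'] := (D_dec lab' x HL').1 HD.
  split; [apply/(Z_dec lab _ HL H3) | apply/(D_dec lab _ HL)].
  + rewrite Mx_j Mx_k; split; last by apply/ZM.
    * case: (swap_w E0 HE0 HwE0) => -[E1 E2]; rewrite E1 /= ?eqxx //.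
      by move: Zj; rewrite E2 /=.
    * case: (swap_w E0 HE0 HwE0) => -[E1 E2]; rewrite E1 /= ?eqxx ?orbT //.
      by move=> _; rewrite (Dc j k) ?subrr // E2.
  + split; last by apply/DM.
    case: (swap_w E0 HE0 HwE0) => -[E1 E2]; rewrite E1 // => a b [<- <-].
    move: Zk; rewrite E2 /= => Zk.
    by rewrite Mx_j Mx_k (Zk jk) subr0.
- have [Zj Zk Zo'] := (Z_dec lab _ HL H3).1 HZ.
  have [Dc DR'] := (D_dec lab _ HL).1 HD.
  rewrite Mx_j in Zj; rewrite Mx_k in Zk.
  split; [apply/(Z_dec lab' _ HL' H3') | apply/(D_dec lab' _ HL')].
  + split; last by apply/ZM.
    * case: (swap_w E0 HE0 HwE0) => -[E1 E2]; rewrite E2 /= ?eqxx //.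
      by move: Zj; rewrite E1 /=.
    * case: (swap_w E0 HE0 HwE0) => -[E1 E2]; rewrite E2 /= ?eqxx ?orbT //.
      move=> _; have := Dc j k; rewrite E1 => /(_ erefl); rewrite Mx_j Mx_k => h.
      by rewrite -(subKr (x j ord0) (x k ord0)) -h subrr.
  + split; last by apply/DM.
    case: (swap_w E0 HE0 HwE0) => -[E1 E2]; rewrite E2 // => a b [<- <-].
    move: Zk; rewrite E1 /= => Zk.
    by apply/eqP; rewrite -subr_eq0; apply/eqP; apply: Zk.
Qed.

End E0.

Lemma key v (x : 'cV[K]_N) : on_line adj lab' v x <-> on_line adj lab v (M *m x).
Proof.
case: (eqVneq v w) => [Hv|vw].
  subst v; exact: key_w.
case: (boolP [exists E in tedges adj, (v \in E) && (w \in E)]).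
- case/exists_inP => E HE /andP [HvE HwE]; exact: key_E0 HE HvE HwE vw x.
- rewrite negb_exists_in => /forall_inP H; apply: key_far => E HE HvE.
  by move: (H E HE); rewrite HvE.
Qed.

End Main.
Unset Implicit Arguments.

Theorem lemma1p6 (K : closedFieldType) (V : finType) (adj : rel V) (n : nat)
    (lab : {set V} -> label n.+1) (w : V) (j k : 'I_n.+1) :
  [pchar K] =i pred0 ->
  good_graph adj ->
  n = (#|V| - genus adj)%N ->
  admissible adj lab ->
  deg adj w = 3%N -> j != k -> labels_at_are adj lab w j k ->
  exists M : 'M[K]_n.+1,
    [/\ M \in unitmx,
        (exists2 c : K, c != 0 & M *m M = c%:M)
      & forall x : 'cV[K]_n.+1, x != 0 ->
          (on_curve adj (swap_labels lab w j k) x <->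
           exists y : 'cV[K]_n.+1, [/\ y != 0, on_curve adj lab y & x = M *m y])].
Proof.
move=> _ [_ [Hsym _] _ H4' _] _ Hadm Hw3 jk Hlw.
have H4 : forall u v, deg adj u = 3%N -> deg adj v = 3%N -> u != v -> ~~ adj u v.
  by move=> u v hu hv huv; exact: (H4' u v hu hv huv).1.
have Hfar : forall (E : {set V}) (i : 'I_n.+1), E \in tedges adj -> w \notin E ->
    appears i (lab E) -> i != j /\ i != k.
  case: Hadm => c [Hc1 Hc2 Hc3 Hc4 Hc5].
  have [_ [Hcw1 _ _ _]] := Hc1 w Hw3.
  case: (Hlw) => _ [E1 HE1 [Hw1 HL1]] [E2 HE2 [Hw2 HL2]] _.
  have Jc : j = (c w).1 \/ j = (c w).2.
    by move: (Hcw1 E1 HE1 Hw1); rewrite HL1 => -[[->]|[[->]|//]]; auto.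
  have Kc : k = (c w).1 \/ k = (c w).2.
    by move: (Hcw1 E2 HE2 Hw2); rewrite HL2 => -[[->]|[[->]|//]]; auto.
  move=> E i HE HwE Hap.
  suff : i <> (c w).1 /\ i <> (c w).2.
    by case=> h1 h2; case: Jc => ->; case: Kc => ->; split; apply/eqP.
  case: (boolP [forall v in E, deg adj v != 3%N]) => Hr.
  - have Hrem : remaining adj E.
      split => // v HvE; by move/forall_inP: Hr => /(_ v HvE) /eqP.
    have [i' Hl] := Hc2 E Hrem.
    move: Hap; rewrite Hl => /appearsP /= /eqP Hii; subst i'.
    exact: Hc4 w E i Hw3 Hrem Hl.
  - move: Hr; rewrite negb_forall_in => /exists_inP [v HvE]; rewrite negbK => /eqP Hv3.
    have [_ [Hv1 _ _ _]] := Hc1 v Hv3.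
    have Hvw : v <> w by move=> h; subst v; rewrite HvE in HwE.
    have Hi : i = (c v).1 \/ i = (c v).2.
      move: Hap; case: (Hv1 E HE HvE) => [|[|]] -> /appearsP /=.
      + by move/eqP <-; left.
      + by move/eqP <-; right.
      + by case/orP => /eqP <-; [left|right].
    exact: Hc3 v w Hv3 Hw3 Hvw i Hi.
have Key := key K V adj n.+1 lab w j k jk Hsym H4 Hw3 Hlw Hfar.
exists (Mx K j k); split.
- exact: (mulmx1_unit (MM K n.+1 j k jk)).1.
- by exists 1; [exact: oner_neq0 | exact: MM].
- move=> x Hx; split.
  + case=> v Hv; exists (Mx K j k *m x); split.
    * apply/eqP => H0; move/eqP: Hx; apply.
      by rewrite -(mul1mx x) -(MM K n.+1 j k jk) -mulmxA H0 mulmx0.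
    * by exists v; apply/Key.
    * by rewrite mulmxA MM // mul1mx.
  + case=> y [Hy [v Hv] ->]; exists v; apply/Key.
    by rewrite mulmxA MM // mul1mx.
Qed.
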